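(* In $NOM$, for all finite sequences $\Gamma,\Delta$ of formulas and all formulas $\phi,\psi,\chi$, the following rules are derivable: (i) from $\Gamma,\phi,\phi,\Delta\vdash\psi$ infer $\Gamma,\phi,\Delta\vdash\psi$; (ii) from $\Gamma,\phi,\Delta\vdash\psi$ infer $\Gamma,\phi,\phi,\Delta\vdash\psi$; (iii) from $\Gamma\vdash\phi$ and $\Gamma,\phi,\Delta\vdash\psi$ infer $\Gamma,\Delta\vdash\psi$; (iv) from $\Gamma\vdash\phi$ and $\Gamma,\Delta\vdash\psi$ infer $\Gamma,\phi,\Delta\vdash\psi$; (v) from $\Gamma,\phi,\psi\vdash\phi$, $\Gamma,\phi,\psi,\Delta\vdash\chi$ and $\Gamma,\psi,\phi\vdash\psi$ infer $\Gamma,\psi,\phi,\Delta\vdash\chi$; (vi) $\Gamma,\neg\phi,\phi,\Delta\vdash\psi$ is derivable; (vii) $\Gamma,\phi,\neg\phi,\Delta\vdash\psi$ is derivable; (viii) from $\Gamma,\neg\neg\phi,\Delta\vdash\psi$ infer $\Gamma,\phi,\Delta\vdash\psi$; (ix) from $\Gamma,\phi,\Delta\vdash\psi$ infer $\Gamma,\neg\neg\phi,\Delta\vdash\psi$; (x) from $\Gamma,\phi,\Delta\vdash\psi$ and $\Gamma,\neg\phi,\Delta\vdash\psi$ infer $\Gamma,\Delta\vdash\psi$.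
   Context: The propositional deductive system $NOM$: formulas are built from propositional letters using $\wedge$, $\rightarrow$, $\neg$. Sequents are $\phi_1,\ldots,\phi_n\vdash\psi$ ($n\ge0$) with antecedent a finite ordered sequence; commas denote concatenation. With $\Gamma$ a finite possibly empty sequence of formulas and $\phi,\psi,\chi$ formulas, the rules of $NOM$ are: (assumption) $\Gamma,\phi\vdash\phi$; (cut) $\Gamma\vdash\phi$, $\Gamma,\phi\vdash\psi$ $\Rightarrow$ $\Gamma\vdash\psi$; (paste) $\Gamma\vdash\phi$, $\Gamma\vdash\psi$ $\Rightarrow$ $\Gamma,\phi\vdash\psi$; (compatible exchange) $\Gamma,\phi,\psi\vdash\phi$, $\Gamma,\phi,\psi\vdash\chi$, $\Gamma,\psi,\phi\vdash\psi$ $\Rightarrow$ $\Gamma,\psi,\phi\vdash\chi$; ($\wedge$-intro) $\Gamma\vdash\phi$, $\Gamma\vdash\psi$ $\Rightarrow$ $\Gamma\vdash\phi\wedge\psi$; ($\wedge$-elim) $\Gamma\vdash\phi\wedge\psi$ $\Rightarrow$ $\Gamma\vdash\phi$ and $\Rightarrow$ $\Gamma\vdash\psi$; ($\rightarrow$-intro) $\Gamma,\phi\vdash\psi$ $\Rightarrow$ $\Gamma\vdash\phi\rightarrow\psi$; ($\rightarrow$-elim) $\Gamma\vdash\phi\rightarrow\psi$ $\Rightarrow$ $\Gamma,\phi\vdash\psi$; (excluded middle) $\Gamma,\phi\vdash\psi$, $\Gamma,\neg\phi\vdash\psi$ $\Rightarrow$ $\Gamma\vdash\psi$; (explosion) $\Gamma\vdash\neg\phi$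 $\Rightarrow$ $\Gamma,\phi\vdash\psi$. A rule schema is derivable if in every instance its conclusion can be derived from its premises using these rules. *)

(* Defs.v *)
From Stdlib Require Import List.
Import ListNotations.

Inductive form : Type :=
| Var : nat -> form
| And : form -> form -> form
| Imp : form -> form -> form
| Neg : form -> form.

Definition sequent : Type := (list form * form)%type.

(* [derives P s]: the sequent s can be derived in NOM using the sequents
   satisfying P as additional premises (leaves). With P = no premises this is
   plain derivability in NOM. *)
Inductive derives (P : sequent -> Prop) : sequent -> Prop :=
| d_premise : forall s, P s -> derives P s
| d_assum : forall G a, derives P (G ++ [a], a)
| d_cut : forall G a b,
    derives P (G, a) -> derives P (G ++ [a], b) -> derives P (G, b)
| d_paste : forall G a b,
    derives P (G, a) -> derives P (G, b) -> derives P (G ++ [a], b)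
| d_cexch : forall G a b c,
    derives P (G ++ [a; b], a) -> derives P (G ++ [a; b], c) ->
    derives P (G ++ [b; a], b) -> derives P (G ++ [b; a], c)
| d_andI : forall G a b,
    derives P (G, a) -> derives P (G, b) -> derives P (G, And a b)
| d_andE1 : forall G a b, derives P (G, And a b) -> derives P (G, a)
| d_andE2 : forall G a b, derives P (G, And a b) -> derives P (G, b)
| d_impI : forall G a b, derives P (G ++ [a], b) -> derives P (G, Imp a b)
| d_impE : forall G a b, derives P (G, Imp a b) -> derives P (G ++ [a], b)
| d_em : forall G a b,
    derives P (G ++ [a], b) -> derives P (G ++ [Neg a], b) -> derives P (G, b)
| d_explosion : forall G a b, derives P (G, Neg a) -> derives P (G ++ [a], b).

Definition derivable_rule (prems : list sequent) (concl : sequent) : Prop :=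
  derives (fun s => In s prems) concl.

(* Main.v *)
Require Import Defs.
From Stdlib Require Import List.
Import ListNotations.

Fixpoint imps (D : list form) (p : form) : form :=
  match D with [] => p | d :: D' => Imp d (imps D' p) end.

Lemma up : forall P D G p, derives P (G ++ D, p) -> derives P (G, imps D p).
Proof.
  induction D as [|d D IH]; intros G p H; simpl.
  - rewrite app_nil_r in H; exact H.
  - apply d_impI. apply IH. rewrite <- app_assoc. exact H.
Qed.

Lemma down : forall P D G p, derives P (G, imps D p) -> derives P (G ++ D, p).
Proof.
  induction D as [|d D IH]; intros G p H; simpl in *.
  - rewrite app_nil_r; exact H.
  - replace (G ++ d :: D) with ((G ++ [d]) ++ D) by (rewrite <- app_assoc; reflexivity).
    apply IH. apply d_impE. exact H.
Qed.

Lemma upA : forall P G l D p, derives P (G ++ l ++ D, p) -> derives P (G ++ l, imps D p).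
Proof. intros. apply up. rewrite <- app_assoc. exact H. Qed.

Lemma downA : forall P G l D p, derives P (G ++ l, imps D p) -> derives P (G ++ l ++ D, p).
Proof. intros. rewrite app_assoc. apply down. exact H. Qed.

Lemma two : forall (G : list form) a b, G ++ [a; b] = (G ++ [a]) ++ [b].
Proof. intros. rewrite <- app_assoc. reflexivity. Qed.

Lemma nnE : forall P G a, derives P (G ++ [Neg (Neg a)], a).
Proof.
  intros. apply (d_em _ _ a). apply d_assum. apply d_explosion. apply d_assum.
Qed.

Lemma nnI : forall P G a, derives P (G ++ [a], Neg (Neg a)).
Proof.
  intros. apply d_impE. apply (d_em _ _ (Neg a)).
  - apply d_impI. apply d_explosion. apply d_assum.
  - apply d_impI. apply d_paste. apply nnE. apply d_assum.
Qed.

Lemma viii0 : forall P G a p, derives P (G ++ [Neg (Neg a)], p) -> derives P (G ++ [a], p).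
Proof.
  intros. apply (d_cut _ _ (Neg (Neg a))). apply nnI.
  rewrite <- two. apply d_cexch.
  - rewrite two. apply d_paste. apply nnE. apply d_assum.
  - rewrite two. apply d_paste. apply nnE. exact H.
  - rewrite two. apply nnE.
Qed.

Lemma ix0 : forall P G a p, derives P (G ++ [a], p) -> derives P (G ++ [Neg (Neg a)], p).
Proof.
  intros. apply (d_cut _ _ a). apply nnE.
  rewrite <- two. apply d_cexch.
  - rewrite two. apply nnE.
  - rewrite two. apply d_paste. apply nnI. exact H.
  - rewrite two. apply d_paste. apply nnE. apply d_assum.
Qed.

Ltac prem := apply d_premise; simpl; tauto.

Theorem theorem2p6 :
  forall (G D : list form) (phi psi chi : form),
    (* (i) contraction *)
    derivable_rule [(G ++ [phi; phi] ++ D, psi)] (G ++ [phi] ++ D, psi) /\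
    (* (ii) duplication *)
    derivable_rule [(G ++ [phi] ++ D, psi)] (G ++ [phi; phi] ++ D, psi) /\
    (* (iii) generalized cut *)
    derivable_rule [(G, phi); (G ++ [phi] ++ D, psi)] (G ++ D, psi) /\
    (* (iv) generalized paste *)
    derivable_rule [(G, phi); (G ++ D, psi)] (G ++ [phi] ++ D, psi) /\
    (* (v) generalized compatible exchange *)
    derivable_rule [(G ++ [phi; psi], phi); (G ++ [phi; psi] ++ D, chi);
                    (G ++ [psi; phi], psi)]
                   (G ++ [psi; phi] ++ D, chi) /\
    (* (vi) *)
    derivable_rule [] (G ++ [Neg phi; phi] ++ D, psi) /\
    (* (vii) *)
    derivable_rule [] (G ++ [phi; Neg phi] ++ D, psi) /\
    (* (viii) *)
    derivable_rule [(G ++ [Neg (Neg phi)] ++ D, psi)] (G ++ [phi] ++ D, psi) /\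
    (* (ix) *)
    derivable_rule [(G ++ [phi] ++ D, psi)] (G ++ [Neg (Neg phi)] ++ D, psi) /\
    (* (x) generalized excluded middle *)
    derivable_rule [(G ++ [phi] ++ D, psi); (G ++ [Neg phi] ++ D, psi)]
                   (G ++ D, psi).
Proof.
  intros G D phi psi chi; unfold derivable_rule.
  repeat split.
  - apply downA. apply (d_cut _ _ phi). apply d_assum.
    rewrite <- two. apply upA. prem.
  - apply downA. rewrite two. apply d_paste. apply d_assum. apply upA. prem.
  - apply down. apply (d_cut _ _ phi). prem. apply upA. prem.
  - apply downA. apply d_paste. prem. apply up. prem.
  - apply downA. apply d_cexch. prem. apply upA. prem. prem.
  - apply downA. rewrite two. apply d_explosion. apply d_assum.
  - apply downA. rewrite two. apply d_explosion. apply nnI.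
  - apply downA. apply viii0. apply upA. prem.
  - apply downA. apply ix0. apply upA. prem.
  - apply down. apply (d_em _ _ phi); apply upA; prem.
Qed.
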